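(* Let $G=(V,E)$ be a finite graph in which each edge carries one of the four decorations $(+,o),(+,s),(-,o),(-,s)$. Let $H$ be the $2$-cover of $G$ encoded by the signs, and decorate each edge of $H$ with the letter ($o$ or $s$) of the edge of $G$ it lies over. For $B\subseteq E$ let $\overline{B}$ denote the graph $(V,B)$ in which each edge with a $-$ sign has its letter swapped ($o\leftrightarrow s$) while edges with a $+$ sign keep their letter; for $A\subseteq E$ the graph $(V,A)$ keeps the original letters. Then the numbers of balanced factorientations satisfy $$g(H)=\sum_{A\subseteq E}g(A)\,g\big(\overline{E\setminus A}\big).$$
   Context: The $2$-cover encoded by the signs has vertex set $V\times\{0,1\}$; an edge $uv$ with sign $+$ lifts to the edges $(u,0)(v,0),(u,1)(v,1)$, and an edge with sign $-$ lifts to $(u,0)(v,1),(u,1)(v,0)$. Given a graph $F$ whose edges are each labelled $o$ or $s$, a factorientation consists of orienting every $o$-edge and deciding for every $s$-edge whether it is in a subgraph or not. The mixed degree of a vertex $v$ is the number of $o$-edges oriented towards $v$ plus the number of selected $s$-edges incident to $v$. The factorientation is balanced if every vertex $v$ has mixed degree $d_F(v)/2$, where $d_F(v)$ is the degree of $v$ in $F$. $g(F)$ denotes the number of balanced factorientations of $F$ (with its labels); $g(A)$ means $g$ of the labelled graph $(V,A)$. *)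

(* Defs.v *)
From mathcomp Require Import all_boot.
Set Implicit Arguments.
Unset Strict Implicit.
Unset Printing Implicit Defensive.

(* A labelled (multi)graph: vertex finType V, edge finType E, each edge e has
   endpoints (ends e).1, (ends e).2 and a letter lab e : bool
   (true = o, false = s). *)

Definition deg (V E : finType) (ends : E -> V * V) (v : V) : nat :=
  #|[set e | (ends e).1 == v]| + #|[set e | (ends e).2 == v]|.

(* A factorientation is x : {ffun E -> bool}: for an o-edge e, x e = true
   means e is oriented towards (ends e).2, false towards (ends e).1;
   for an s-edge e, x e = true means e is selected. *)
Definition mixdeg (V E : finType) (ends : E -> V * V) (lab : E -> bool)
    (x : {ffun E -> bool}) (v : V) : nat :=
  #|[set e | lab e && (if x e then (ends e).2 == v else (ends e).1 == v)]|
  + #|[set e | ~~ lab e && x e && (((ends e).1 == v) || ((ends e).2 == v))]|.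

Definition balanced (V E : finType) (ends : E -> V * V) (lab : E -> bool)
    (x : {ffun E -> bool}) : bool :=
  [forall v, (mixdeg ends lab x v).*2 == deg ends v].

Definition g (V E : finType) (ends : E -> V * V) (lab : E -> bool) : nat :=
  #|[set x : {ffun E -> bool} | balanced ends lab x]|.

Definition sub_ends (V E : finType) (ends : E -> V * V) (A : {set E})
  : {e : E | e \in A} -> V * V := fun e => ends (sval e).
Definition sub_lab (E : finType) (lab : E -> bool) (A : {set E})
  : {e : E | e \in A} -> bool := fun e => lab (sval e).

(* signs: sgn e = true means +, false means - *)
(* the 2-cover H: vertices V * bool, edges E * bool; the edge (e,b) over e
   with ends u v joins (u,b) to (v,b) if sign +, and (u,b) to (v,~~b) if - *)
Definition cover_ends (V E : finType) (ends : E -> V * V) (sgn : E -> bool)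
  : E * bool -> (V * bool) * (V * bool) :=
  fun eb => (((ends eb.1).1, eb.2),
             ((ends eb.1).2, if sgn eb.1 then eb.2 else ~~ eb.2)).
Definition cover_lab (E : finType) (lab : E -> bool) : E * bool -> bool :=
  fun eb => lab eb.1.

Definition bar_lab (E : finType) (sgn lab : E -> bool) : E -> bool :=
  fun e => if sgn e then lab e else ~~ lab e.

Arguments sub_ends {V E} ends A _.
Arguments sub_lab {E} lab A _.

(* Main.v *)
Require Import Defs.
From mathcomp Require Import all_boot zify.
Set Implicit Arguments. Unset Strict Implicit. Unset Printing Implicit Defensive.

Definition ctr (V : eqType) (p : V * V) (l bt : bool) (v : V) : bool :=
  if l then (if bt then p.2 == v else p.1 == v)
  else bt && ((p.1 == v) || (p.2 == v)).

Lemma card_set_sum (T : finType) (P : pred T) :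
  #|[set x | P x]| = \sum_x (P x : nat).
Proof.
rewrite -sum1_card big_mkcond /=; apply: eq_bigr => x _; rewrite inE; by case: (P x).
Qed.

Lemma mixdegE (V E : finType) (ends : E -> V * V) lab x v :
  mixdeg ends lab x v = \sum_e (ctr (ends e) (lab e) (x e) v : nat).
Proof.
rewrite /mixdeg !card_set_sum -big_split /=; apply: eq_bigr => e _.
rewrite /ctr; case: (lab e) => /=; by rewrite ?addn0.
Qed.

Lemma degE (V E : finType) (ends : E -> V * V) v :
  deg ends v = \sum_e (((ends e).1 == v) + ((ends e).2 == v)).
Proof. by rewrite /deg !card_set_sum -big_split. Qed.

Lemma sum_sig (E : finType) (A : {set E}) (F : E -> nat) :
  \sum_(e' : {e | e \in A}) F (sval e') = \sum_e (if e \in A then F e else 0).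
Proof.
rewrite -big_mkcond.
rewrite (reindex_omap (sval : {e | e \in A} -> E) insub); last first.
  by move=> i iA; rewrite insubT.
by apply: eq_bigl=> -[i iA]/=; rewrite insubT ?iA /= eqxx.
Qed.

Lemma sum_pair (T1 T2 : finType) (F : T1 * T2 -> nat) :
  \sum_p F p = \sum_i \sum_j F (i, j).
Proof. by rewrite pair_big; apply: eq_bigr => [[]]. Qed.

Definition res (E : finType) (A : {set E}) (r : {ffun E -> bool})
  : {ffun {e | e \in A} -> bool} := [ffun e' => r (sval e')].

Definition glue (E : finType) (A : {set E}) (y : {ffun {e | e \in A} -> bool})
  (z : {ffun {e | e \in ~: A} -> bool}) : {ffun E -> bool} :=
  [ffun e => match (insub e : option {e | e \in A}) with
             | Some e' => y e'
             | None => match (insub e : option {e | e \in ~: A}) with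
                       | Some e'' => z e'' | None => false end end].

Lemma split_count (E : finType) (A : {set E})
  (P : {ffun {e | e \in A} -> bool} -> bool)
  (Q : {ffun {e | e \in ~: A} -> bool} -> bool) :
  \sum_(r : {ffun E -> bool}) (P (res A r) && Q (res (~: A) r) : nat)
  = #|[set y | P y]| * #|[set z | Q z]|.
Proof.
rewrite !card_set_sum big_distrl /=.
rewrite (eq_bigr (fun y => \sum_z (P y && Q z : nat))); last first.
  move=> y _; rewrite big_distrr /=; apply: eq_bigr => z _; by case: (P y); case: (Q z).
rewrite pair_big /=.
rewrite [LHS](reindex (fun p : {ffun {e | e \in A} -> bool} * {ffun {e | e \in ~: A} -> bool} => glue p.1 p.2)) /=; last first.
  exists (fun r => (res A r, res (~: A) r)) => [[y z] _ | r _] /=.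
  - congr pair; apply/ffunP => e; rewrite !ffunE.
    + by rewrite valK.
    + have He : sval e \notin A by have := svalP e; rewrite inE.
      rewrite insubN // valK //.
  - apply/ffunP => e; rewrite !ffunE.
    case: insubP => [e' He' <- | He]; first by rewrite ffunE.
    case: insubP => [e'' He'' <- | He2]; first by rewrite ffunE.
    by move: He2; rewrite inE He.
apply: eq_bigr => [[y z]] _ /=.
have -> : res A (glue y z) = y.
  by apply/ffunP => e; rewrite !ffunE valK.
have -> // : res (~: A) (glue y z) = z.
apply/ffunP => e; rewrite !ffunE.
have He : sval e \notin A by have := svalP e; rewrite inE.
by rewrite insubN // valK.
Qed.

Definition Phi (E : finType) (sgn : E -> bool) (p : {set E} * {ffun E -> bool})
  : {ffun E * bool -> bool} :=
  [ffun eb => if eb.1 \in p.1 then p.2 eb.1 else ((eb.2 == sgn eb.1) == p.2 eb.1)].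

Definition Psi (E : finType) (sgn : E -> bool) (x : {ffun E * bool -> bool})
  : {set E} * {ffun E -> bool} :=
  ([set e | x (e, true) == x (e, false)], [ffun e => x (e, sgn e)]).

Lemma Phi_bij (E : finType) (sgn : E -> bool) : bijective (Phi sgn).
Proof.
exists (Psi sgn).
- move=> [A r]; rewrite /Psi; congr pair.
  + apply/setP => e; rewrite inE !ffunE /=.
    case: (e \in A); first by rewrite eqxx.
    by case: (sgn e); case: (r e).
  + apply/ffunP => e; rewrite !ffunE /=; case: (e \in A) => //.
    by rewrite eqxx.
- move=> x; apply/ffunP => [[e b]]; rewrite !ffunE /= inE.
  case: b; case: (sgn e); case Ht: (x (e,true)); case Hf: (x (e,false)); by rewrite ?Ht ?Hf.
Qed.

Section Main.
Variables (V E : finType) (ends : E -> V * V) (sgn lab : E -> bool).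
Hypothesis loopless : forall e, (ends e).1 != (ends e).2.
Variables (A : {set E}) (r : {ffun E -> bool}).

Let x := Phi sgn (A, r).
Let cA v e : nat := if e \in A then (ctr (ends e) (lab e) (r e) v : nat) else 0.
Let cB v e : nat := if e \in ~: A then (ctr (ends e) (bar_lab sgn lab e) (r e) v : nat) else 0.
Let dd v e : nat := ((ends e).1 == v) + ((ends e).2 == v).
Let dA v e : nat := if e \in A then dd v e else 0.
Let dB v e : nat := if e \in ~: A then dd v e else 0.
Let m v c e : nat :=
  (ctr (cover_ends ends sgn (e, true)) (lab e) (x (e, true)) (v, c) : nat)
  + (ctr (cover_ends ends sgn (e, false)) (lab e) (x (e, false)) (v, c) : nat).

Lemma edge_facts v e :
  [/\ m v true e = cA v e + cB v e,
      m v false e + cB v e = cA v e + dB v e &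
      forall c, ((cover_ends ends sgn (e,true)).1 == (v,c))
              + ((cover_ends ends sgn (e,true)).2 == (v,c))
              + (((cover_ends ends sgn (e,false)).1 == (v,c))
              + ((cover_ends ends sgn (e,false)).2 == (v,c))) = dA v e + dB v e].
Proof.
have Huw : ~~ (((ends e).1 == v) && ((ends e).2 == v)).
  apply/andP => -[/eqP a /eqP b]; move: (loopless e); by rewrite a b eqxx.
rewrite /m /cA /cB /dA /dB /dd /x /ctr /cover_ends /Phi /bar_lab !ffunE /= inE.
split; last move=> c; rewrite !xpair_eqE /=; move: Huw;
case: ((ends e).1 == v); case: ((ends e).2 == v) => //= _;
case: (e \in A); case: (sgn e); case: (lab e); case: (r e); try case: c; by [].
Qed.

Lemma mix_subA v : mixdeg (sub_ends ends A) (sub_lab lab A) (res A r) v = \sum_e cA v e.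
Proof.
rewrite mixdegE /cA -(sum_sig A (fun e => (ctr (ends e) (lab e) (r e) v : nat))).
by apply: eq_bigr => e' _; rewrite ffunE.
Qed.

Lemma mix_subB v : mixdeg (sub_ends ends (~: A)) (sub_lab (bar_lab sgn lab) (~: A)) (res (~: A) r) v
  = \sum_e cB v e.
Proof.
rewrite mixdegE /cB -(sum_sig (~: A) (fun e => (ctr (ends e) (bar_lab sgn lab e) (r e) v : nat))).
by apply: eq_bigr => e' _; rewrite ffunE.
Qed.

Lemma deg_subA v : deg (sub_ends ends A) v = \sum_e dA v e.
Proof.
rewrite degE /dA /dB -(sum_sig _ (fun e => dd v e)).
by apply: eq_bigr.
Qed.

Lemma deg_subB v : deg (sub_ends ends (~: A)) v = \sum_e dB v e.
Proof.
rewrite degE /dA /dB -(sum_sig _ (fun e => dd v e)).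
by apply: eq_bigr.
Qed.

Lemma mix_H v c : mixdeg (cover_ends ends sgn) (cover_lab lab) x (v, c) = \sum_e m v c e.
Proof.
rewrite mixdegE sum_pair; apply: eq_bigr => e _; by rewrite big_bool.
Qed.

Lemma deg_H v c : deg (cover_ends ends sgn) (v, c) = \sum_e (dA v e + dB v e).
Proof.
rewrite degE sum_pair; apply: eq_bigr => e _; rewrite big_bool.
by case: (edge_facts v e) => _ _ /(_ c) <-.
Qed.

Lemma bal_Phi : balanced (cover_ends ends sgn) (cover_lab lab) x =
  balanced (sub_ends ends A) (sub_lab lab A) (res A r) &&
  balanced (sub_ends ends (~: A)) (sub_lab (bar_lab sgn lab) (~: A)) (res (~: A) r).
Proof.
have F1 v : \sum_e m v true e = \sum_e cA v e + \sum_e cB v e.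
  by rewrite -big_split; apply: eq_bigr => e _; case: (edge_facts v e).
have F2 v : \sum_e m v false e + \sum_e cB v e = \sum_e cA v e + \sum_e dB v e.
  by rewrite -!big_split; apply: eq_bigr => e _; case: (edge_facts v e).
have F3 v : \sum_e (dA v e + dB v e) = \sum_e dA v e + \sum_e dB v e by rewrite big_split.
rewrite /balanced; apply/forallP/andP => [H|[/forallP H1 /forallP H2]].
  split; apply/forallP => v; move: (H (v, true)) (H (v, false));
  rewrite !mix_H !deg_H ?mix_subA ?mix_subB ?deg_subA ?deg_subB F3 => /eqP a /eqP b;
  apply/eqP; move: (F1 v) (F2 v) a b; lia.
move=> [v c]; move: (H1 v) (H2 v).
rewrite mix_H deg_H mix_subA mix_subB deg_subA deg_subB F3 => /eqP a /eqP b; apply/eqP.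
case: c.
  rewrite F1; lia.
move: (F2 v); lia.
Qed.
End Main.
Theorem theorem1p9 (V E : finType) (ends : E -> V * V) (sgn lab : E -> bool)
  (loopless : forall e, (ends e).1 != (ends e).2) :
  g (cover_ends ends sgn) (cover_lab lab) =
  \sum_(A : {set E})
     g (sub_ends ends A) (sub_lab lab A)
     * g (sub_ends ends (~: A)) (sub_lab (bar_lab sgn lab) (~: A)).
Proof.
rewrite /g card_set_sum (reindex (Phi sgn)); last exact: onW_bij (Phi_bij sgn).
rewrite sum_pair; apply: eq_bigr => A _.
rewrite -split_count; apply: eq_bigr => r _.
by rewrite bal_Phi.
Qed.
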